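(* For each $y$ in the peak-insertion set of an avoider $p$ on $[n]$, there is exactly one position $i$ such that $q:=p\oplus_{i}y$ satisfies (i) $q$ is an avoider, (ii) the peak blue entry of $q$ is $y$, and (iii) $q$ has exactly one more blue entry than $p$. Also, for $y$ not in the peak-insertion set of $p$, there is no such $i$.
   Context: Permutations are standard permutations written in one-line form. A permutation on $[n]$ is indecomposable if there is no $k$ with $1\le k<n$ such that its first $k$ entries are exactly $\{1,\dots,k\}$ (the empty permutation is not indecomposable). An ''avoider'' means an indecomposable permutation avoiding both patterns $3241$ and $4321$. A blue (key-2) entry is an entry that serves as the ''2'' in a $321$ pattern or in a $4312$ pattern. For a $321$-containing avoider, let $a$ be the last (rightmost) entry serving as the ''1'' of a $321$ pattern; the peak blue entry is the larger of $a$ and its immediate predecessor. Inserting $y$ at position $i$ into $p$, written $p\oplus_i y$, means incrementing by $1$ each entry $\ge y$ and then placing $y$ in position $i$ (e.g. $3142\oplus_4 2=41523$). LRMax means left-to-right maximum. To a $321$-containing permutation $p$ on $[n]$ associate the triple $(a,b,c)$: $a$ is the last ''1'' of a $321$ in $p$, $b$ is the rightmost entry to the left of $a$ that exceeds $a$, and $c$ is the first non-LRMax entry after $a$ ($c=\infty$ if there is none). Its peak-insertion set is $[a+1,b+1]\cup[c+1,n]$, where $[c+1,n]=\emptyset$ if $c=\infty$. For a $321$-avoiding permutation on $[n]$, set $c=1$ and define its peak-insertion set to be $[2,n]$. *)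

(* Defs.v *)
(* Permutations are one-line words: seq nat with entries 1..n.
   Positions are 0-indexed internally; insertion position i is 1-indexed as in the paper. *)
From mathcomp Require Import all_boot.
Set Implicit Arguments. Unset Strict Implicit. Unset Printing Implicit Defensive.

Definition ent (p : seq nat) (j : nat) : nat := nth 0 p j.

Definition is_perm (n : nat) (p : seq nat) : bool := perm_eq p (iota 1 n).

Definition indecomposable (p : seq nat) : bool :=
  (0 < size p) &&
  all (fun k => ~~ perm_eq (take k p) (iota 1 k)) (iota 1 (size p).-1).

Definition occ (p pat idx : seq nat) : bool :=
  [&& size idx == size pat, sorted ltn idx, all (fun j => j < size p) idx &
      all (fun a => all (fun b =>
        (ent p (nth 0 idx a) < ent p (nth 0 idx b)) == (nth 0 pat a < nth 0 pat b))
        (iota 0 (size pat))) (iota 0 (size pat))].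

Definition contains (p pat : seq nat) : bool :=
  [exists t : (size pat).-tuple 'I_(size p), occ p pat (map val t)].

Definition avoids (p pat : seq nat) : bool := ~~ contains p pat.

Definition avoider (n : nat) (p : seq nat) : bool :=
  [&& is_perm n p, indecomposable p, avoids p [:: 3; 2; 4; 1] & avoids p [:: 4; 3; 2; 1]].

Definition blue (p : seq nat) (x : nat) : bool :=
  [exists t : 3.-tuple 'I_(size p),
     occ p [:: 3; 2; 1] (map val t) && (ent p (nth 0 (map val t) 1) == x)] ||
  [exists t : 4.-tuple 'I_(size p),
     occ p [:: 4; 3; 1; 2] (map val t) && (ent p (nth 0 (map val t) 3) == x)].

Definition nblue (p : seq nat) : nat := count (blue p) p.

Definition one321_at (p : seq nat) (j : nat) : bool :=
  [exists t : 3.-tuple 'I_(size p),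
     occ p [:: 3; 2; 1] (map val t) && (nth 0 (map val t) 2 == j)].

Definition is_last_one (p : seq nat) (ja : nat) : Prop :=
  one321_at p ja /\ forall j, one321_at p j -> j <= ja.

Definition peak_blue_is (p : seq nat) (v : nat) : Prop :=
  exists ja, is_last_one p ja /\ v = maxn (ent p ja) (ent p ja.-1).

Definition is_b (p : seq nat) (ja jb : nat) : Prop :=
  jb < ja /\ ent p ja < ent p jb /\
  forall k, jb < k -> k < ja -> ~ (ent p ja < ent p k).

Definition LRMax (p : seq nat) (k : nat) : Prop :=
  forall k', k' < k -> ent p k' < ent p k.

Definition is_c (p : seq nat) (ja jc : nat) : Prop :=
  ja < jc /\ jc < size p /\ ~ LRMax p jc /\
  forall k, ja < k -> k < jc -> LRMax p k.

Definition in_peak_insertion_set (n : nat) (p : seq nat) (y : nat) : Prop :=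
  (~~ contains p [:: 3; 2; 1] /\ 2 <= y <= n) \/
  (exists ja jb, is_last_one p ja /\ is_b p ja jb /\
     ((ent p ja + 1 <= y <= ent p jb + 1) \/
      (exists jc, is_c p ja jc /\ ent p jc + 1 <= y <= n))).

Definition ins (p : seq nat) (i y : nat) : seq nat :=
  let p' := map (fun v => if y <= v then v.+1 else v) p in
  take i.-1 p' ++ y :: drop i.-1 p'.

Definition good_insertion (n : nat) (p : seq nat) (i y : nat) : Prop :=
  avoider n.+1 (ins p i y) /\ peak_blue_is (ins p i y) y /\
  nblue (ins p i y) = (nblue p).+1.

Lemma ins_example : ins [:: 3; 1; 4; 2] 4 2 = [:: 4; 1; 5; 2; 3].
Proof. by []. Qed.

(* Main.v *)
Require Import Defs.
From mathcomp Require Import all_boot zify.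
From Stdlib Require Import Classical.
Set Implicit Arguments. Unset Strict Implicit. Unset Printing Implicit Defensive.

Lemma occ321 p i j k : occ p [:: 3;2;1] [:: i;j;k] =
  [&& i < j, j < k, k < size p, ent p j < ent p i & ent p k < ent p j].
Proof.
rewrite /occ /= !ltnn /= !eqbF_neg !eqb_id !andbT.
apply/idP/idP; move=> H; repeat (case/andP: H => ? H); lia.
Qed.

Lemma occ4321 p i j k l : occ p [:: 4;3;2;1] [:: i;j;k;l] =
  [&& i < j, j < k, k < l, l < size p, ent p j < ent p i, ent p k < ent p j & ent p l < ent p k].
Proof.
rewrite /occ /= !ltnn /= !eqbF_neg !eqb_id !andbT.
apply/idP/idP; move=> H; repeat (case/andP: H => ? H); lia.
Qed.

Lemma occ3241 p i j k l : occ p [:: 3;2;4;1] [:: i;j;k;l] =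
  [&& i < j, j < k, k < l, l < size p, ent p j < ent p i, ent p i < ent p k & ent p l < ent p j].
Proof.
rewrite /occ /= !ltnn /= !eqbF_neg !eqb_id !andbT.
apply/idP/idP; move=> H; repeat (case/andP: H => ? H); lia.
Qed.

Lemma occ4312 p i j k l : occ p [:: 4;3;1;2] [:: i;j;k;l] =
  [&& i < j, j < k, k < l, l < size p, ent p j < ent p i, ent p l < ent p j & ent p k < ent p l].
Proof.
rewrite /occ /= !ltnn /= !eqbF_neg !eqb_id !andbT.
apply/idP/idP; move=> H; repeat (case/andP: H => ? H); lia.
Qed.

Lemma tuple3P (T : Type) (t : 3.-tuple T) : exists a b c, tval t = [:: a; b; c].
Proof. case: t => [[|a [|b [|c [|d s]]]] //=] _; by exists a, b, c. Qed.
Lemma tuple4P (T : Type) (t : 4.-tuple T) : exists a b c d, tval t = [:: a; b; c; d].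
Proof. case: t => [[|a [|b [|c [|d [|e s]]]]] //=] _; by exists a, b, c, d. Qed.

Section Pat.
Variable p : seq nat.
Local Notation P := (ent p).
Local Notation N := (size p).

Lemma c321P : contains p [:: 3;2;1] <->
  exists i j k, [/\ i < j, j < k, k < N, P j < P i & P k < P j].
Proof.
split.
- case/existsP => t; have [a [b [c E]]] := tuple3P t.
  rewrite /= E /= occ321 => /and5P [? ? ? ? ?]. by exists a, b, c.
- case=> i [j [k [h1 h2 h3 h4 h5]]].
  have hi : i < N by lia. have hj : j < N by lia.
  apply/existsP; exists [tuple (Ordinal hi); (Ordinal hj); (Ordinal h3)].
  rewrite /= occ321; apply/and5P; split => //.
Qed.

Lemma c4321P : contains p [:: 4;3;2;1] <->
  exists i j k l, [/\ i < j, j < k, k < l, l < N & [/\ P j < P i, P k < P j & P l < P k]].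
Proof.
split.
- case/existsP => t; have [a [b [c [d E]]]] := tuple4P t.
  rewrite /= E /= occ4321 => H. repeat (case/andP: H => ? H).
  by exists a, b, c, d.
- case=> i [j [k [l [h1 h2 h3 h4 [h5 h6 h7]]]]].
  have hi : i < N by lia. have hj : j < N by lia. have hk : k < N by lia.
  apply/existsP; exists [tuple (Ordinal hi); (Ordinal hj); (Ordinal hk); (Ordinal h4)].
  rewrite /= occ4321; rewrite h1 h2 h3 h4 h5 h6 h7 //.
Qed.

Lemma c3241P : contains p [:: 3;2;4;1] <->
  exists i j k l, [/\ i < j, j < k, k < l, l < N & [/\ P j < P i, P i < P k & P l < P j]].
Proof.
split.
- case/existsP => t; have [a [b [c [d E]]]] := tuple4P t.
  rewrite /= E /= occ3241 => H. repeat (case/andP: H => ? H).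
  by exists a, b, c, d.
- case=> i [j [k [l [h1 h2 h3 h4 [h5 h6 h7]]]]].
  have hi : i < N by lia. have hj : j < N by lia. have hk : k < N by lia.
  apply/existsP; exists [tuple (Ordinal hi); (Ordinal hj); (Ordinal hk); (Ordinal h4)].
  rewrite /= occ3241; rewrite h1 h2 h3 h4 h5 h6 h7 //.
Qed.

Lemma one321P j : one321_at p j <->
  exists i k, [/\ i < k, k < j, j < N, P k < P i & P j < P k].
Proof.
split.
- case/existsP => t; have [a [b [c E]]] := tuple3P t.
  rewrite /= E /= occ321 => /andP [H /eqP Ec]. subst j.
  repeat (case/andP: H => ? H). by exists a, b.
- case=> i [k [h1 h2 h3 h4 h5]].
  have hi : i < N by lia. have hk : k < N by lia.
  apply/existsP; exists [tuple (Ordinal hi); (Ordinal hk); (Ordinal h3)].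
  rewrite /= occ321 h1 h2 h3 h4 h5 /=. done.
Qed.

Definition bpos (j : nat) : Prop :=
  (exists i k, [/\ i < j, j < k, k < N, P j < P i & P k < P j]) \/
  (exists i i' k, [/\ i < i', i' < k, k < j, j < N & [/\ P i' < P i, P j < P i' & P k < P j]]).

Lemma blueP x : blue p x <-> exists j, bpos j /\ P j = x.
Proof.
split.
- case/orP.
  + case/existsP => t; have [a [b [c E]]] := tuple3P t.
    rewrite /= E /= occ321 => /andP [H /eqP Ex].
    repeat (case/andP: H => ? H). exists b; split => //. left. exists a, c; split => //.
  + case/existsP => t; have [a [b [c [d E]]]] := tuple4P t.
    rewrite /= E /= occ4312 => /andP [H /eqP Ex].
    repeat (case/andP: H => ? H). exists d; split => //. right. exists a, b, c; split => //.
- case=> j [[[i [k [h1 h2 h3 h4 h5]]] | [i [i' [k [h1 h2 h3 h4 [h5 h6 h7]]]]]] Ex].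
  + apply/orP; left.
    have hi : i < N by lia. have hj : j < N by lia.
    apply/existsP; exists [tuple (Ordinal hi); (Ordinal hj); (Ordinal h3)].
    rewrite /= occ321 h1 h2 h3 h4 h5 /= Ex eqxx. done.
  + apply/orP; right.
    have hi : i < N by lia. have hi' : i' < N by lia. have hk : k < N by lia.
    apply/existsP; exists [tuple (Ordinal hi); (Ordinal hi'); (Ordinal hk); (Ordinal h4)].
    rewrite /= occ4312 h1 h2 h3 h4 h5 h6 h7 /= Ex eqxx. done.
Qed.

End Pat.

Definition sh (y v : nat) := if y <= v then v.+1 else v.

Lemma sh_lt y a b : (sh y a < sh y b) = (a < b).
Proof. rewrite /sh; case: ifP; case: ifP => *; apply/idP/idP; lia. Qed.
Lemma sh_lty y a : (sh y a < y) = (a < y).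
Proof. rewrite /sh; case: ifP => *; apply/idP/idP; lia. Qed.
Lemma y_lt_sh y a : (y < sh y a) = (y <= a).
Proof. rewrite /sh; case: ifP => *; apply/idP/idP; lia. Qed.
Lemma sh_neq y a : (sh y a == y) = false.
Proof. rewrite /sh; case: ifP => *; apply/eqP; lia. Qed.


Section Ins.
Variables (p : seq nat) (y s : nat).
Hypothesis y0 : 0 < y.
Hypothesis sN : s <= size p.
Local Notation P := (ent p).
Local Notation q := (ins p s.+1 y).
Local Notation Q := (ent (ins p s.+1 y)).
Local Notation N := (size p).

Lemma size_ins : size q = N.+1.
Proof. rewrite /ins /= size_cat /= size_take size_drop size_map. case: ifP; lia. Qed.

Lemma ent_ins t : Q t = if t < s then sh y (P t) else if t == s then y else sh y (P t.-1).
Proof.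
rewrite /ins /ent /= nth_cat size_take size_map.
have -> : (if s < N then s else N) = s by case: ifP; lia.
case: ltnP => H1.
- rewrite nth_take //. case: (ltnP t N) => H2.
  + by rewrite (nth_map 0).
  + lia.
- case: eqVneq => [->|ne]; first by rewrite subnn.
  have -> : t - s = (t - s).-1.+1 by lia.
  rewrite /= nth_drop.
  have -> : s + (t - s).-1 = t.-1 by lia.
  case: (ltnP t.-1 N) => H2.
  + by rewrite (nth_map 0).
  + rewrite !nth_default ?size_map //; try lia. rewrite /sh; case: ifP => //; lia.
Qed.

Lemma Q_lt t : t < s -> Q t = sh y (P t).
Proof. by move=> H; rewrite ent_ins H. Qed.
Lemma Q_eq : Q s = y.
Proof. by rewrite ent_ins ltnn eqxx. Qed.
Lemma Q_gt t : s < t -> Q t = sh y (P t.-1).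
Proof. move=> H; rewrite ent_ins; case: ifP; [lia|]; case: eqP; [lia|done]. Qed.

Definition hh t := if t < s then t else t.-1.
Definition gg k := if k < s then k else k.+1.

Lemma hfacts t : t < N.+1 -> t != s ->
  [/\ Q t = sh y (P (hh t)), hh t < N, (t < s -> hh t = t) & (s < t -> hh t = t.-1)].
Proof.
move=> H1 H2; rewrite /hh; case: (ltngtP t s) => H3.
- rewrite Q_lt //; split => //; lia.
- rewrite Q_gt //; split => //; lia.
- by rewrite H3 eqxx in H2.
Qed.

Lemma gfacts k : k < N ->
  [/\ Q (gg k) = sh y (P k), gg k < N.+1, (k < s -> gg k = k) & (s <= k -> gg k = k.+1)].
Proof.
move=> H1; rewrite /gg; case: (ltnP k s) => H3.
- rewrite Q_lt //; split => //; lia.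
- rewrite Q_gt //; split => //; lia.
Qed.


Ltac hfx t :=
  let E := fresh "E" in let L := fresh "L" in let A := fresh "A" in let B := fresh "B" in
  have [E L A B] := hfacts (t:=t) ltac:(lia) ltac:(apply/eqP; lia).

Ltac shrw H := rewrite ?sh_lt ?sh_lty ?y_lt_sh in H.

Lemma q4321F : contains q [:: 4;3;2;1] ->
  contains p [:: 4;3;2;1] \/
  (exists j k l, [/\ s <= j, j < k, k < l, l < N & [/\ P j < y, P k < P j & P l < P k]]) \/
  (exists i k l, [/\ i < s, s <= k, k < l, l < N & [/\ y <= P i, P k < y & P l < P k]]) \/
  (exists i j l, [/\ i < j, j < s, s <= l, l < N & [/\ P j < P i, y <= P j & P l < y]]) \/
  (exists i j k, [/\ i < j, j < k, k < s, k < N & [/\ P j < P i, P k < P j & y <= P k]]).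
Proof.
case/c4321P => [t1 [t2 [t3 [t4 [h1 h2 h3 h4 [v1 v2 v3]]]]]]. rewrite size_ins in h4.
case: (eqVneq t1 s) => e1.
  rewrite e1 Q_eq in v1. hfx t2; hfx t3; hfx t4. rewrite E E0 E1 in v1 v2 v3.
  shrw v1; shrw v2; shrw v3.
  right; left; exists (hh t2), (hh t3), (hh t4); repeat split; lia.
case: (eqVneq t2 s) => e2.
  rewrite e2 Q_eq in v1 v2. hfx t1; hfx t3; hfx t4. rewrite E E0 E1 in v1 v2 v3.
  shrw v1; shrw v2; shrw v3.
  right; right; left; exists (hh t1), (hh t3), (hh t4); repeat split; lia.
case: (eqVneq t3 s) => e3.
  rewrite e3 Q_eq in v2 v3. hfx t1; hfx t2; hfx t4. rewrite E E0 E1 in v1 v2 v3.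
  shrw v1; shrw v2; shrw v3.
  right; right; right; left; exists (hh t1), (hh t2), (hh t4); repeat split; lia.
case: (eqVneq t4 s) => e4.
  rewrite e4 Q_eq in v3. hfx t1; hfx t2; hfx t3. rewrite E E0 E1 in v1 v2 v3.
  shrw v1; shrw v2; shrw v3.
  right; right; right; right; exists (hh t1), (hh t2), (hh t3); repeat split; lia.
hfx t1; hfx t2; hfx t3; hfx t4. rewrite E E0 E1 E2 in v1 v2 v3.
shrw v1; shrw v2; shrw v3.
left; apply/c4321P; exists (hh t1), (hh t2), (hh t3), (hh t4); repeat split; lia.
Qed.

Lemma q3241F : contains q [:: 3;2;4;1] ->
  contains p [:: 3;2;4;1] \/
  (exists j k l, [/\ s <= j, j < k, k < l, l < N & [/\ P j < y, y <= P k & P l < P j]]) \/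
  (exists i k l, [/\ i < s, s <= k, k < l, l < N & [/\ y <= P i, P i < P k & P l < y]]) \/
  (exists i j l, [/\ i < j, j < s, s <= l, l < N & [/\ P j < P i, P i < y & P l < P j]]) \/
  (exists i j k, [/\ i < j, j < k, k < s, k < N & [/\ P j < P i, P i < P k & y <= P j]]).
Proof.
case/c3241P => [t1 [t2 [t3 [t4 [h1 h2 h3 h4 [v1 v2 v3]]]]]]. rewrite size_ins in h4.
case: (eqVneq t1 s) => e1.
  rewrite e1 Q_eq in v1 v2. hfx t2; hfx t3; hfx t4. rewrite E E0 E1 in v1 v2 v3.
  shrw v1; shrw v2; shrw v3.
  right; left; exists (hh t2), (hh t3), (hh t4); repeat split; lia.
case: (eqVneq t2 s) => e2.
  rewrite e2 Q_eq in v1 v3. hfx t1; hfx t3; hfx t4. rewrite E E0 E1 in v1 v2 v3.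
  shrw v1; shrw v2; shrw v3.
  right; right; left; exists (hh t1), (hh t3), (hh t4); repeat split; lia.
case: (eqVneq t3 s) => e3.
  rewrite e3 Q_eq in v2. hfx t1; hfx t2; hfx t4. rewrite E E0 E1 in v1 v2 v3.
  shrw v1; shrw v2; shrw v3.
  right; right; right; left; exists (hh t1), (hh t2), (hh t4); repeat split; lia.
case: (eqVneq t4 s) => e4.
  rewrite e4 Q_eq in v3. hfx t1; hfx t2; hfx t3. rewrite E E0 E1 in v1 v2 v3.
  shrw v1; shrw v2; shrw v3.
  right; right; right; right; exists (hh t1), (hh t2), (hh t3); repeat split; lia.
hfx t1; hfx t2; hfx t3; hfx t4. rewrite E E0 E1 E2 in v1 v2 v3.
shrw v1; shrw v2; shrw v3.
left; apply/c3241P; exists (hh t1), (hh t2), (hh t3), (hh t4); repeat split; lia.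
Qed.

End Ins.

Section C.
Variables (p : seq nat) (y s : nat).
Hypothesis y0 : 0 < y.
Hypothesis sN : s <= size p.
Local Notation P := (ent p).
Local Notation q := (ins p s.+1 y).
Local Notation Q := (ent (ins p s.+1 y)).
Local Notation N := (size p).

Let hf := hfacts y0 sN.
Let gf := gfacts y0 sN.
Let Qe := Q_eq y0 sN.
Let Ql := Q_lt y0 sN.
Let Qg := Q_gt y0 sN.
Let szq := size_ins y0 sN.

Ltac hfx2 t :=
  let E := fresh "E" in let L := fresh "L" in let A := fresh "A" in let B := fresh "B" in
  have [E L A B] := hf (t:=t) ltac:(lia) ltac:(apply/eqP; lia).
Ltac gfx k :=
  let E := fresh "E" in let L := fresh "L" in let A := fresh "A" in let B := fresh "B" in
  have [E L A B] := gf (k:=k) ltac:(lia).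
Ltac shrw2 H := rewrite ?sh_lt ?sh_lty ?y_lt_sh in H.
Ltac shrwg := rewrite ?sh_lt ?sh_lty ?y_lt_sh.

Lemma q4321B3 i j l : i < j -> j < s -> s <= l -> l < N ->
  P j < P i -> y <= P j -> P l < y -> contains q [:: 4;3;2;1].
Proof.
move=> h1 h2 h3 h4 v1 v2 v3; apply/c4321P; exists i, j, s, l.+1.
rewrite szq Qe (Ql (t:=i)) ?(Ql (t:=j)) ?(Qg (t:=l.+1)) //=; try lia. shrwg. repeat split; lia.
Qed.

Lemma q3241B3 i j l : i < j -> j < s -> s <= l -> l < N ->
  P j < P i -> P i < y -> P l < P j -> contains q [:: 3;2;4;1].
Proof.
move=> h1 h2 h3 h4 v1 v2 v3; apply/c3241P; exists i, j, s, l.+1.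
rewrite szq Qe (Ql (t:=i)) ?(Ql (t:=j)) ?(Qg (t:=l.+1)) //=; try lia. shrwg. repeat split; lia.
Qed.

Lemma oneqB k : one321_at p k -> one321_at q (gg s k).
Proof.
case/one321P => i [j [h1 h2 h3 v1 v2]]. gfx k; gfx i; gfx j.
apply/one321P; exists (gg s i), (gg s j). rewrite szq E E0 E1; shrwg; repeat split; lia.
Qed.

Lemma oneqB_s i j : i < j -> j < s -> P j < P i -> y <= P j -> one321_at q s.
Proof.
move=> h1 h2 v1 v2; apply/one321P; exists i, j.
rewrite szq Qe (Ql (t:=i)) ?(Ql (t:=j)); try lia. shrwg; repeat split; lia.
Qed.

Lemma oneqB_y2 i k : i < s -> s <= k -> k < N -> y <= P i -> P k < y -> one321_at q k.+1.
Proof.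
move=> h1 h2 h3 v1 v2; apply/one321P; exists i, s.
rewrite szq Qe (Ql (t:=i)) ?(Qg (t:=k.+1)) //=; try lia. shrwg; repeat split; lia.
Qed.

Lemma oneqF t : one321_at q t -> t < N.+1 /\
  ((t = s /\ exists i j, [/\ i < j, j < s, P j < P i & y <= P j]) \/
   (t != s /\ one321_at p (hh s t)) \/
   (s < t /\ exists i, [/\ i < s, y <= P i & P t.-1 < y]) \/
   (s < t /\ exists j, [/\ s <= j, j < t.-1, P j < y & P t.-1 < P j])).
Proof.
case/one321P => t1 [t2 [h1 h2 h3 v1 v2]]. rewrite szq in h3. split => //.
case: (eqVneq t s) => e.
  rewrite e Qe in v2. hfx2 t1; hfx2 t2. rewrite E E0 in v1 v2. shrw2 v1; shrw2 v2.
  left; split => //; exists (hh s t1), (hh s t2); split; lia.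
case: (eqVneq t1 s) => e1.
  rewrite e1 Qe in v1. hfx2 t; hfx2 t2. rewrite (B ltac:(lia)) in E. rewrite E E0 in v1 v2. shrw2 v1; shrw2 v2.
  right; right; right; split; [lia|]. exists (hh s t2); split; lia.
case: (eqVneq t2 s) => e2.
  rewrite e2 Qe in v1 v2. hfx2 t; hfx2 t1. rewrite (B ltac:(lia)) in E. rewrite E E0 in v1 v2. shrw2 v1; shrw2 v2.
  right; right; left; split; [lia|]. exists (hh s t1); split; lia.
hfx2 t; hfx2 t1; hfx2 t2. rewrite E E0 E1 in v1 v2. shrw2 v1; shrw2 v2.
right; left; split => //. apply/one321P; exists (hh s t1), (hh s t2); split; lia.
Qed.

Lemma blueqL k : bpos p k -> bpos q (gg s k).
Proof.
rewrite /bpos szq.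
case=> [[i [l [h1 h2 h3 v1 v2]]]|[i [j [l [h1 h2 h3 h4 [v1 v2 v3]]]]]].
- gfx k; gfx i; gfx l. left; exists (gg s i), (gg s l). rewrite E E0 E1; shrwg; split; lia.
- gfx k; gfx i; gfx j; gfx l. right; exists (gg s i), (gg s j), (gg s l).
  rewrite E E0 E1 E2; shrwg; repeat split; lia.
Qed.

Lemma blueqF k : k < N -> bpos q (gg s k) ->
  bpos p k \/
  (s <= k /\ P k < y /\ exists l, [/\ k < l, l < N & P l < P k]) \/
  (k < s /\ y <= P k /\ exists i, i < k /\ P k < P i) \/
  (exists j l, [/\ s <= j, j < l, l < k & [/\ P j < y, P k < P j & P l < P k]]) \/
  (exists i l, [/\ i < s, s <= l, l < k & [/\ y <= P i, P k < y & P l < P k]]) \/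
  (exists i j, [/\ i < j, j < s, s <= k & [/\ P j < P i, P k < P j & y <= P k]]).
Proof.
move=> hk; rewrite /bpos szq.
gfx k. rewrite E.
case=> [[t1 [t3 [h1 h2 h3 v1 v2]]]|[t1 [t2 [t3 [h1 h2 h3 h4 [v1 v2 v3]]]]]].
- case: (eqVneq t1 s) => e1.
    rewrite e1 Qe in v1. hfx2 t3. rewrite E0 in v2. shrw2 v1; shrw2 v2.
    right; left; split; [lia|split => //]. exists (hh s t3); split; lia.
  case: (eqVneq t3 s) => e3.
    rewrite e3 Qe in v2. hfx2 t1. rewrite E0 in v1. shrw2 v1; shrw2 v2.
    right; right; left; split; [lia|split => //]. exists (hh s t1); split; lia.
  hfx2 t1; hfx2 t3. rewrite E0 in v1; rewrite E1 in v2. shrw2 v1; shrw2 v2.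
  left; left; exists (hh s t1), (hh s t3); split; lia.
- case: (eqVneq t1 s) => e1.
    rewrite e1 Qe in v1. hfx2 t2; hfx2 t3. rewrite E0 in v1 v2; rewrite E1 in v3.
    shrw2 v1; shrw2 v2; shrw2 v3.
    right; right; right; left. exists (hh s t2), (hh s t3); repeat split; lia.
  case: (eqVneq t2 s) => e2.
    rewrite e2 Qe in v1 v2. hfx2 t1; hfx2 t3. rewrite E0 in v1; rewrite E1 in v3.
    shrw2 v1; shrw2 v2; shrw2 v3.
    right; right; right; right; left. exists (hh s t1), (hh s t3); repeat split; lia.
  case: (eqVneq t3 s) => e3.
    rewrite e3 Qe in v3. hfx2 t1; hfx2 t2. rewrite E0 E1 in v1; rewrite E1 in v2.
    shrw2 v1; shrw2 v2; shrw2 v3.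
    right; right; right; right; right. exists (hh s t1), (hh s t2); repeat split; lia.
  hfx2 t1; hfx2 t2; hfx2 t3. rewrite E0 E1 in v1; rewrite E1 in v2; rewrite E2 in v3.
  shrw2 v1; shrw2 v2; shrw2 v3.
  left; right; exists (hh s t1), (hh s t2), (hh s t3); repeat split; lia.
Qed.

Lemma blueqB1 i k : i < s -> s <= k -> k < N -> y <= P i -> P k < y -> blue q y.
Proof.
move=> h1 h2 h3 v1 v2; apply/blueP; exists s; split; last by rewrite Qe.
left; exists i, k.+1; rewrite szq Qe (Ql (t:=i)) ?(Qg (t:=k.+1)) //=; try lia. shrwg; split; lia.
Qed.

Lemma blueqB2 i j k : i < j -> j < k -> k < s -> P j < P i -> y <= P j -> P k < y -> blue q y.
Proof.
move=> h1 h2 h3 v1 v2 v3; apply/blueP; exists s; split; last by rewrite Qe.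
right; exists i, j, k; rewrite szq Qe (Ql (t:=i)) ?(Ql (t:=j)) ?(Ql (t:=k)); try lia. shrwg; repeat split; lia.
Qed.

End C.

Lemma decompP (p : seq nat) k : uniq p -> k <= size p ->
  perm_eq (take k p) (iota 1 k) <-> (forall j, j < k -> 0 < ent p j <= k) .
Proof.
move=> up kN; split.
- move=> H j jk. have : ent p j \in iota 1 k.
    rewrite -(perm_mem H) /ent -(nth_take 0 jk). apply: mem_nth. by rewrite size_takel.
  rewrite mem_iota. lia.
- move=> H0. apply: uniq_perm; first exact: take_uniq.
  + exact: iota_uniq.
  + apply: (uniq_min_size (s1 := take k p) (s2 := iota 1 k) (take_uniq k up) _ _).2.
    * move=> x /(nthP 0) [j]; rewrite size_takel // => hjk <-.
      rewrite nth_take // mem_iota. exact: (H0 j hjk).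
    * by rewrite size_iota size_takel.
Qed.



Section PF.
Variables (n : nat) (p : seq nat).
Hypothesis Hperm : is_perm n p.
Local Notation P := (ent p).

Lemma szp : size p = n.
Proof. by rewrite (perm_size Hperm) size_iota. Qed.
Lemma uniqp : uniq p.
Proof. by rewrite (perm_uniq Hperm) iota_uniq. Qed.
Lemma memp x : (x \in p) = (0 < x <= n).
Proof. rewrite (perm_mem Hperm) mem_iota. apply/idP/idP; lia. Qed.
Lemma Prange k : k < n -> 0 < P k <= n.
Proof. move=> H; rewrite -memp /ent mem_nth // szp //. Qed.
Lemma Pinj i j : i < n -> j < n -> P i = P j -> i = j.
Proof. move=> hi hj; rewrite /ent => /eqP; rewrite nth_uniq ?szp // ?uniqp //; first by move/eqP. Qed.
Lemma Psurj v : 0 < v <= n -> exists k, k < n /\ P k = v.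
Proof.
move=> H; have : v \in p by rewrite memp.
move=> vp; exists (index v p); rewrite /ent nth_index // -szp index_mem //.
Qed.

Lemma indecPF : indecomposable p -> forall k, 0 < k < n -> exists j, j < k /\ k < P j.
Proof.
case/andP => _ /allP H k hk.
have : k \in iota 1 (size p).-1 by rewrite mem_iota szp; lia.
move/H => /negP H2.
have : ~ (forall j, j < k -> 0 < P j <= k).
  have kN : k <= size p by rewrite szp; lia.
  by move=> H3; apply: H2; apply/(decompP uniqp kN).
move=> H3. case: (boolP (has (fun j => k < P j) (iota 0 k))).
  by case/hasP => j; rewrite mem_iota => jk kj; exists j; split => //; lia.
move/hasPn => H4. exfalso; apply: H3 => j jk.
have := Prange (k:=j) ltac:(lia). have := H4 j; rewrite mem_iota. lia.
Qed.
End PF.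

Lemma indecPB (p : seq nat) n : is_perm n p -> 0 < n ->
  (forall k, 0 < k < n -> exists j, j < k /\ k < ent p j) -> indecomposable p.
Proof.
move=> Hp n0 H. apply/andP; split; first by rewrite (szp Hp).
apply/allP => k; rewrite mem_iota (szp Hp) => hk.
have kN : k <= size p by rewrite (szp Hp); lia.
apply/negP; move/(decompP (uniqp Hp) kN) => H2.
have [j [jk kj]] := H k ltac:(lia).
have := H2 j jk. lia.
Qed.

Section E.
Variables (n : nat) (p : seq nat) (y s : nat).
Hypothesis Hperm : is_perm n p.
Hypothesis y0 : 0 < y.
Hypothesis yN : y <= n.+1.
Hypothesis sn : s <= n.
Local Notation P := (ent p).
Local Notation q := (ins p s.+1 y).
Local Notation Q := (ent (ins p s.+1 y)).

Let sN : s <= size p. Proof. by rewrite (szp Hperm). Qed.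

Lemma perm_ins_q : perm_eq q (y :: map (sh y) p).
Proof.
rewrite /ins -cat1s.
have -> : [seq (if y <= v then v.+1 else v) | v <- p] = map (sh y) p by [].
by rewrite perm_catCA /= cat_take_drop.
Qed.

Lemma is_perm_ins : is_perm n.+1 q.
Proof.
rewrite /is_perm. apply: perm_trans perm_ins_q _.
apply: uniq_perm.
- rewrite /= map_inj_in_uniq ?(uniqp Hperm) ?andbT.
  + apply/mapP => -[x _] /eqP; by rewrite eq_sym sh_neq.
  + move=> a b _ _; rewrite /sh; case: ifP; case: ifP; lia.
- exact: iota_uniq.
- move=> x; rewrite in_cons mem_iota. apply/idP/idP.
  + case/orP => [/eqP ->|/mapP [v]]; first lia.
    rewrite (memp Hperm) /sh => H ->; case: ifP; lia.
  + move=> H. case: (eqVneq x y) => [->|ne]; first by [].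
    apply/orP; right; apply/mapP.
    case: (ltnP x y) => H2.
    * exists x; first by rewrite (memp Hperm); lia.
      rewrite /sh; case: ifP; lia.
    * exists x.-1; first by rewrite (memp Hperm); lia.
      rewrite /sh; case: ifP; lia.
Qed.

Lemma indec_ins : indecomposable p -> ~ (s = 0 /\ y = 1) -> ~ (s = n /\ y = n.+1) ->
  indecomposable q.
Proof.
move=> Hi H1 H2. have Sz := szp Hperm. apply: (indecPB is_perm_ins) => // k hk.
have Hn : 0 < n by move: Hi; case/andP; rewrite (szp Hperm).
have Ip := indecPF Hperm Hi.
case: (leqP k s) => ks.
- case: (ltnP k n) => kn.
  + have [j [jk kj]] := Ip k ltac:(lia). exists j; split => //.
    rewrite (Q_lt y0 sN) ?/sh; try lia. case: ifP; lia.
  + have [j [jn Pj]] := Psurj Hperm (v:=n) ltac:(lia).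
    exists j; split; first lia. rewrite (Q_lt y0 sN) ?/sh; try lia. case: ifP; lia.
- case: (eqVneq k 1) => k1.
  + exists 0; split; first lia. have s0 : s = 0 by lia. rewrite -s0 (Q_eq y0 sN). lia.
  + have [j [jk kj]] := Ip k.-1 ltac:(lia).
    case: (ltnP k (P j)) => H3.
    * exists (gg s j); have [E L A B] := gfacts y0 sN (k:=j) ltac:(lia).
      split; first lia. rewrite E /sh; case: ifP; lia.
    * case: (leqP y k) => H4.
      -- exists (gg s j); have [E L A B] := gfacts y0 sN (k:=j) ltac:(lia).
         split; first lia. rewrite E /sh; case: ifP; lia.
      -- exists s; split; first lia. rewrite (Q_eq y0 sN); lia.
Qed.

Lemma nblue_ins : (forall k, k < n -> blue q (sh y (P k)) = blue p (P k)) -> blue q y ->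
  nblue q = (nblue p).+1.
Proof.
move=> H Hy. rewrite /nblue.
have -> : count (blue q) q = count (blue q) (y :: map (sh y) p).
  by move/permP: perm_ins_q => ->.
rewrite /= Hy count_map add1n; congr S.
apply: eq_in_count => x xp. rewrite /=.
have := H (index x p); rewrite /ent nth_index //. apply.
by rewrite -(szp Hperm) index_mem.
Qed.

End E.

Definition RLmin (p : seq nat) k := forall k', k < k' < size p -> ent p k < ent p k'.
Definition RLsel (p : seq nat) y lo d :=
  [/\ lo <= d, d < size p, RLmin p d, ent p d < y &
      forall k, lo <= k < size p -> RLmin p k -> ent p k < y -> ent p k <= ent p d].
Definition desc (p : seq nat) y ja :=
  exists i j, [/\ i < j, j < ja, ent p j < ent p i & y <= ent p j].

Definition spec n p y s :=
  (exists ja jb, [/\ is_last_one p ja, is_b p ja jb, s = ja.+1, ent p ja < y &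
      (y <= ent p jb + 1 /\ (y = ent p ja + 1 \/ desc p y ja))]) \/
  (exists ja jb, [/\ is_last_one p ja, is_b p ja jb, s = ja, ent p ja + 2 <= y &
      (y <= ent p jb + 1 /\ ~ desc p y ja)]) \/
  (exists ja jb, [/\ is_last_one p ja, is_b p ja jb, ent p jb + 1 < y, y <= n &
      ((exists jc, is_c p ja jc /\ ent p jc < y) /\ RLsel p y ja s)]) \/
  [/\ ~ contains p [:: 3;2;1], 2 <= y, y <= n & RLsel p y 0 s].

Lemma argmax (Pr : nat -> Prop) (F : nat -> nat) lo m :
  (forall k, Pr k \/ ~ Pr k) ->
  (exists k, lo <= k < m /\ Pr k) ->
  exists d, [/\ lo <= d < m, Pr d & forall k, lo <= k < m -> Pr k -> F k <= F d].
Proof.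
move=> Dec; elim: m => [|m IH]; first by case=> k; lia.
case=> k [hk Pk].
case: (Dec m) => Pm.
- case: (ltnP m lo) => hm; first lia.
  case: (classic (exists k, lo <= k < m /\ Pr k)) => [/IH [d [hd Pd Md]]|NE].
  + case: (leqP (F m) (F d)) => Fmd.
    * exists d; split => //; first lia. move=> k' hk' Pk'.
      case: (eqVneq k' m) => [->//|ne]. apply: Md => //; lia.
    * exists m; split => //; first lia. move=> k' hk' Pk'.
      case: (eqVneq k' m) => [->//|ne]. have := Md k' ltac:(lia) Pk'. lia.
  + exists m; split => //; first lia. move=> k' hk' Pk'.
    case: (eqVneq k' m) => [->//|ne]. exfalso; apply: NE; exists k'; split => //; lia.
- have [|d [hd Pd Md]] := IH.
    exists k; split => //. case: (eqVneq k m) => [e|ne]; [by subst k|lia].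
  exists d; split => //; first lia. move=> k' hk' Pk'.
  case: (eqVneq k' m) => [e|ne]; [by subst k'|]. apply: Md => //; lia.
Qed.

Lemma argmin_first (Pr : nat -> Prop) lo m :
  (exists k, lo <= k < m /\ Pr k) ->
  exists d, [/\ lo <= d < m, Pr d & forall k, lo <= k < d -> ~ Pr k].
Proof.
move=> [k [hk Pk]].
have : exists i, Pr (lo + i) /\ lo + i < m by exists (k - lo); split; [have -> : lo + (k - lo) = k by lia|lia].
clear k hk Pk. move=> [i]. elim/ltn_ind: i => i IH [Pi hi].
case: (classic (exists j, j < i /\ Pr (lo + j))) => [[j [ji Pj]]|NE].
- apply: (IH j ji); split => //; lia.
- exists (lo + i); split => //; first lia. move=> k hk Pk; apply: NE.
  exists (k - lo); split; first lia. by have -> : lo + (k - lo) = k by lia.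
Qed.

Section F.
Variables (n : nat) (p : seq nat).
Hypothesis Hav : avoider n p.
Local Notation P := (ent p).

Lemma Hperm : is_perm n p. Proof. by case/and4P: Hav. Qed.
Lemma Hind : indecomposable p. Proof. by case/and4P: Hav. Qed.
Lemma Sz : size p = n. Proof. exact: szp Hperm. Qed.
Lemma no4321 i j k l : i < j -> j < k -> k < l -> l < n ->
  P j < P i -> P k < P j -> P l < P k -> False.
Proof.
move=> *; case/and4P: Hav => _ _ _ /negP; apply; apply/c4321P.
exists i, j, k, l; rewrite Sz; split => //.
Qed.
Lemma no3241 i j k l : i < j -> j < k -> k < l -> l < n ->
  P j < P i -> P i < P k -> P l < P j -> False.
Proof.
move=> *; case/and4P: Hav => _ _ /negP H _; apply: H; apply/c3241P.
exists i, j, k, l; rewrite Sz; split => //.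
Qed.
Lemma Pinj' i j : i < n -> j < n -> P i = P j -> i = j.
Proof. exact: (@Pinj n p Hperm i j). Qed.
Lemma Prange' k : k < n -> 0 < P k <= n.
Proof. exact: (@Prange n p Hperm k). Qed.

Lemma F1p j : one321_at p j -> forall k, j < k < n -> P j < P k.
Proof.
case/one321P => i [i' [h1 h2 h3 v1 v2]] k hk.
case: (ltngtP (P j) (P k)) => // H.
- exfalso; apply: (no4321 h1 h2 (k:=j) (l:=k)); lia.
- have := Pinj' (i:=j) (j:=k) ltac:(rewrite -Sz; lia) ltac:(lia) H. lia.
Qed.

Lemma last_uniq j1 j2 : is_last_one p j1 -> is_last_one p j2 -> j1 = j2.
Proof. move=> [h1 m1] [h2 m2]. have := m1 _ h2. have := m2 _ h1. lia. Qed.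

Lemma b_uniq ja b1 b2 : is_b p ja b1 -> is_b p ja b2 -> b1 = b2.
Proof.
move=> [h1 [v1 m1]] [h2 [v2 m2]].
case: (ltngtP b1 b2) => // H.
- by exfalso; apply: (m1 b2) => //.
- by exfalso; apply: (m2 b1) => //.
Qed.

Lemma b_exists ja : is_last_one p ja -> exists jb, is_b p ja jb.
Proof.
move=> [/one321P [i [i' [h1 h2 h3 v1 v2]]] _].
have [d [hd Pd Md]] := @argmax (fun k => P ja < P k) id 0 ja
  (fun k => ltac:(case: (ltnP (P ja) (P k)); [left|right]; lia))
  ltac:(exists i'; split; lia).
exists d; split; first lia. split => //.
move=> k h1' h2' h3'. have := Md k ltac:(lia) h3'. rewrite /=. lia.
Qed.

Lemma last_c321 ja : is_last_one p ja -> contains p [:: 3;2;1].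
Proof.
move=> [/one321P [i [i' [h1 h2 h3 v1 v2]]] _]. apply/c321P.
by exists i, i', ja.
Qed.

Lemma Lb ja jb : is_last_one p ja -> is_b p ja jb -> exists u, u < jb /\ P jb < P u.
Proof.
move=> [/one321P [i [i' [h1 h2 h3 v1 v2]]] _] [b1 [b2 b3]].
have i'b : i' <= jb.
  case: (leqP i' jb) => // H; exfalso; apply: (b3 i') => //; lia.
case: (ltngtP i' jb) => H.
- case: (ltngtP (P i') (P jb)) => H2.
  + case: (ltngtP (P i) (P jb)) => H3.
    * exfalso; apply: (no3241 (i:=i) (j:=i') (k:=jb) (l:=ja)); rewrite -?Sz; lia.
    * exists i; split; lia.
    * have := Pinj' (i:=i) (j:=jb) ltac:(rewrite -Sz; lia) ltac:(rewrite -Sz; lia) H3. lia.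
  + exists i; split; lia.
  + have := Pinj' (i:=i') (j:=jb) ltac:(rewrite -Sz; lia) ltac:(rewrite -Sz; lia) H2. lia.
- lia.
- subst i'; exists i; split; lia.
Qed.

Lemma Lc ja jb : is_last_one p ja -> is_b p ja jb -> forall k, ja < k < n -> P jb < P k.
Proof.
move=> Hl Hb k hk. have [u [u1 u2]] := Lb Hl Hb.
move: (Hl) (Hb) => [o1 o2] [b1 [b2 b3]].
case: (ltngtP (P jb) (P k)) => // H.
- exfalso. have : one321_at p k.
    apply/one321P; exists u, jb; rewrite Sz; split => //; lia.
  move/o2; lia.
- have := Pinj' (i:=jb) (j:=k) ltac:(lia) ltac:(lia) H. lia.
Qed.

Lemma RLsel_uniq y lo d1 d2 : RLsel p y lo d1 -> RLsel p y lo d2 -> d1 = d2.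
Proof.
move=> [a1 b1 c1 e1 f1] [a2 b2 c2 e2 f2].
have := f1 d2 ltac:(lia) c2 e2. have := f2 d1 ltac:(lia) c1 e1.
move=> H1 H2. apply: Pinj'; rewrite -?Sz //; lia.
Qed.

Lemma spec_unique y s1 s2 : spec n p y s1 -> spec n p y s2 -> s1 = s2.
Proof.
move=> H1 H2.
have LU := last_uniq. have BU := b_uniq.
case: H1 => [[ja [jb [l b e v1 [v2 v3]]]]|[[ja [jb [l b e v1 [v2 v3]]]]|[[ja [jb [l b v1 v2 [v3 v4]]]]|[v1 v2 v3 v4]]]];
case: H2 => [[ja' [jb' [l' b' e' w1 [w2 w3]]]]|[[ja' [jb' [l' b' e' w1 [w2 w3]]]]|[[ja' [jb' [l' b' w1 w2 [w3 w4]]]]|[w1 w2 w3 w4]]]];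
  try subst s1; try subst s2;
  try (have ? := LU _ _ l l'; subst ja'; have ? := BU _ _ _ b b'; subst jb');
  try (by exfalso; apply: v1; apply: last_c321 l');
  try (by exfalso; apply: w1; apply: last_c321 l);
  try lia.
all: try (exfalso; case: v3 => [?|?]; [lia|by []]).
all: try (exfalso; case: w3 => [?|?]; [lia|by []]).
- exact: RLsel_uniq v4 w4.
- exact: RLsel_uniq v4 w4.
Qed.

Lemma spec_in_set y s : spec n p y s -> in_peak_insertion_set n p y.
Proof.
case=> [[ja [jb [l b e v1 [v2 v3]]]]|[[ja [jb [l b e v1 [v2 v3]]]]|[[ja [jb [l b v1 v2 [[jc [c1 c2]] v4]]]]|[v1 v2 v3 v4]]]].
- right; exists ja, jb; split => //; split => //; left; lia.
- right; exists ja, jb; split => //; split => //; left; lia.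
- right; exists ja, jb; split => //; split => //; right; exists jc; split => //; lia.
- left; split; [by apply/negP|lia].
Qed.

Lemma rlmin_dec k : RLmin p k \/ ~ RLmin p k.
Proof. exact: classic. Qed.

Lemma set_spec y : 0 < y <= n.+1 -> in_peak_insertion_set n p y -> exists s, spec n p y s.
Proof.
move=> Hy. case=> [[Hc Hy2]|[ja [jb [Hl [Hb Hr]]]]].
- have n0 : 0 < n by lia.
  have [k1 [k1n Pk1]] := Psurj Hperm (v:=1) ltac:(lia).
  have R1 : RLmin p k1.
    move=> k' hk'. rewrite Sz in hk'. have := Prange' (k:=k') ltac:(lia).
    have := Pinj' (i:=k1) (j:=k') ltac:(lia) ltac:(lia). lia.
  have := @argmax (fun k => RLmin p k /\ P k < y) P 0 n (fun k => classic _).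
  case; first by exists k1; split; [lia|split => //; lia].
  move=> d [hd Pd Md].
  exists d; right; right; right; split; [by apply/negP|lia|lia|].
  split; rewrite ?Sz; try lia; try tauto.
  move=> k hk H1 H2; apply: Md => //; rewrite -?Sz; lia.
- have [Hl1 Hl2] := Hl.
  have Pja : forall k, ja < k < n -> P ja < P k by apply: F1p.
  have ja_n : ja < n by move: Hl1 => /one321P [? [? [_ _ ? _ _]]]; rewrite -Sz.
  have Hin : ~ (P ja + 1 <= y <= P jb + 1) -> P jb + 1 < y /\ exists jc, is_c p ja jc /\ P jc < y /\ y <= n.
    move=> H. case: Hr => [H2|[jc [[c1 [c2 [c3 c4]]] c5]]]; first by exfalso.
    have := Pja jc ltac:(rewrite -Sz; lia). move=> H3. split; first lia.
    exists jc; split; [by split|lia].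
  case: (classic (P ja + 1 <= y <= P jb + 1)) => Hi.
  + case: (classic (y = P ja + 1 \/ desc p y ja)) => Hd.
    * exists ja.+1; left; exists ja, jb; split => //; [lia|split => //; lia].
    * exists ja; right; left; exists ja, jb; split => //.
      -- have : y <> P ja + 1 by tauto. lia.
      -- split; [lia|tauto].
  + have [H1 [jc [H2 [H3 H4]]]] := Hin Hi.
    have R1 : RLmin p ja by move=> k' hk'; rewrite Sz in hk'; apply: Pja.
    have R2 : P ja < y by case: Hr; [lia|case=> jc' [[? [? [? ?]]] ?]; have := Pja jc' ltac:(rewrite -Sz; lia); lia].
    have := @argmax (fun k => RLmin p k /\ P k < y) P ja n (fun k => classic _).
    case; first by exists ja; split; [lia|split].
    move=> d [hd Pd Md].
    exists d; right; right; left; exists ja, jb; split => //; split.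
    * by exists jc.
    * split; rewrite ?Sz; try lia; try tauto.
      move=> k hk H5 H6; apply: Md => //; rewrite -?Sz; lia.
Qed.

End F.

Lemma last_exists p : contains p [:: 3;2;1] -> exists ja, is_last_one p ja.
Proof.
case/c321P => i [j [k [h1 h2 h3 v1 v2]]].
have := @argmax (fun t => one321_at p t) id 0 (size p) (fun t => classic _).
case. exists k; split; first lia. apply/one321P; exists i, j; split => //.
move=> d [hd Pd Md]. exists d; split => // t Ht.
have : t < size p by case/one321P: Ht => ? [? [? ? ? ? ?]].
move=> tN. exact: Md.
Qed.

Section G.
Variables (n : nat) (p : seq nat) (y s : nat).
Hypothesis Hav : avoider n p.
Hypothesis y0 : 0 < y.
Hypothesis yN : y <= n.+1.
Hypothesis sn : s <= n.
Local Notation P := (ent p).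
Local Notation q := (ins p s.+1 y).
Local Notation Q := (ent (ins p s.+1 y)).

Let Sz := Sz Hav.
Let sN : s <= size p. Proof. by rewrite Sz. Qed.
Let N4 := no4321 Hav.
Let N3 := no3241 Hav.
Let PI := Pinj' Hav.
Let PR := Prange' Hav.

Lemma soundness : good_insertion n p s.+1 y -> spec n p y s.
Proof.
move=> [Hq [[jq [[Ho Hlast] Hmax]] _]].
case/and4P: Hq => Hpq _ /negP Hq3 /negP Hq4.
have NR3 : forall i j l, i < j -> j < s -> s <= l -> l < n ->
    P j < P i -> y <= P j -> P l < y -> False.
  move=> i j l *; apply: Hq4; apply: (q4321B3 y0 sN (i:=i) (j:=j) (l:=l)); rewrite ?Sz //.
have T3 : forall i j l, i < j -> j < s -> s <= l -> l < n ->
    P j < P i -> P i < y -> P l < P j -> False.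
  move=> i j l *; apply: Hq3; apply: (q3241B3 y0 sN (i:=i) (j:=j) (l:=l)); rewrite ?Sz //.
have lastq : forall t, one321_at q t -> t <= jq by [].
have QI : forall a b, a < n.+1 -> b < n.+1 -> Q a = Q b -> a = b by move=> a b; apply: (Pinj Hpq).
have jqN : jq < n.+1 by case/one321P: Ho => ? [? [_ _ h _ _]]; rewrite (size_ins y0 sN) Sz in h.
have sN1 : s < n.+1 by lia.
have Qs := Q_eq y0 sN.
have Y1 : forall k, k < n -> one321_at p k -> gg s k <= jq.
  by move=> k kn /(oneqB y0 sN); apply: lastq.
have LR := fun t => Q_lt y0 sN (t:=t).
have GR := fun t => Q_gt y0 sN (t:=t).
have [[E1 M1]|[E2 M2]] : (y = Q jq /\ Q jq.-1 <= Q jq) \/ (y = Q jq.-1 /\ Q jq <= Q jq.-1) by lia.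
-
  have e : jq = s by apply: QI => //; rewrite Qs.
  subst jq.
  case/(oneqF y0 sN): Ho => _ [[_ [i [j [h1 h2 v1 v2]]]]|[[/eqP //]|[[H0 _]|[H0 _]]]]; last 2 first; [lia|lia|].
  have s1 : 0 < s by lia.
  have Ps1 : P s.-1 < y.
    have := M1. rewrite Qs (LR s.-1) ?sh_lty; last lia.
    have : sh y (P s.-1) != y by rewrite sh_neq.
    move=> /eqP ne H. have : sh y (P s.-1) < y by lia. by rewrite sh_lty.
  have jlt : j < s.-1.
    case: (ltnP j s.-1) => // H. have : j = s.-1 by lia. move=> ?; subst j. lia.
  have La : is_last_one p s.-1.
    split.
    + apply/one321P; exists i, j; rewrite Sz; split => //; lia.
    + move=> k Hk. have kn : k < n by case/one321P: Hk => ? [? [_ _ h _ _]]; rewrite -Sz.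
      have := Y1 k kn Hk. rewrite /gg; case: ifP; lia.
  have [jb Hb] := b_exists Hav La.
  left; exists s.-1, jb; split => //; first lia.
  case: (Hb) => [b1 [b2 b3]].
  split.
  + case: (leqP y (P jb + 1)) => // H. exfalso.
    have jjb : j <= jb.
      case: (leqP j jb) => // H2. exfalso; by apply: (b3 j) => //; lia.
    case: (ltngtP j jb) => H3; last by subst j; lia.
    * apply: (N4 (i:=i) (j:=j) (k:=jb) (l:=s.-1)); lia.
    * lia.
  + right; exists i, j; split => //.
-
  have jq1 : 0 < jq by case/one321P: Ho => ? [? [_ h _ _ _]]; lia.
  have e : jq.-1 = s by apply: QI => //; [lia | rewrite Qs].
  have ejq : jq = s.+1 by lia.
  subst jq.
  have sn' : s < n by lia.
  have Ps : P s < y.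
    have := M2. rewrite Qs (GR s.+1) //= ?sh_lty.
    have : sh y (P s) != y by rewrite sh_neq.
    move=> /eqP ne H. have : sh y (P s) < y by lia. by rewrite sh_lty.
  have O := Ho.
  case/(oneqF y0 sN): O => _ [[H0 _]|[[_ Hpo]|[[_ [U [U1 U2 U3]]]|[_ [j' [j1 j2 _ _]]]]]]; [lia| | |lia].
  +
    have Hpo' : one321_at p s by move: Hpo; rewrite /hh; case: ifP => //; lia.
    have La : is_last_one p s.
      split => // k Hk. have kn : k < n by case/one321P: Hk => ? [? [_ _ h _ _]]; rewrite -Sz.
      have := Y1 k kn Hk. rewrite /gg; case: ifP; lia.
    have [jb Hb] := b_exists Hav La.
    case: (Hb) => [b1 [b2 b3]].
    case/one321P: Hpo' => i [i' [h1 h2 h3 v1 v2]].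
    have yi : y <= P i.
      case: (leqP y (P i)) => // H. exfalso. apply: (T3 i i' s); lia.
    right; left; exists s, jb; split => //.
    * case: (leqP (P s + 2) y) => // H. exfalso.
      apply: (NR3 i i' s); lia.
    * split.
      -- case: (leqP y (P jb + 1)) => // H. exfalso.
         have [w [wn Pw]] := Psurj (Hperm Hav) (v:=y.-1) ltac:(lia).
         case: (ltngtP w s) => H2.
         ++ case: (ltngtP w jb) => H3.
            ** apply: (T3 w jb s); lia.
            ** by apply: (b3 w) => //; lia.
            ** subst w; lia.
         ++ have := lastq _ (oneqB_y2 y0 sN (i:=i) (k:=w) ltac:(lia) ltac:(lia) ltac:(rewrite Sz; lia) yi ltac:(lia)).
            lia.
         ++ subst w; lia.
      -- case=> X [V [x1 x2 x3 x4]]. apply: (NR3 X V s); lia.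
  +
    case: (classic (one321_at p s)) => Hps.
    *
      have La : is_last_one p s.
        split => // k Hk. have kn : k < n by case/one321P: Hk => ? [? [_ _ h _ _]]; rewrite -Sz.
        have := Y1 k kn Hk. rewrite /gg; case: ifP; lia.
      have [jb Hb] := b_exists Hav La.
      case: (Hb) => [b1 [b2 b3]].
      case/one321P: (Hps) => i [i' [h1 h2 h3 v1 v2]].
      have yi : y <= P i.
        case: (leqP y (P i)) => // H. exfalso. apply: (T3 i i' s); lia.
      right; left; exists s, jb; split => //.
      -- case: (leqP (P s + 2) y) => // H. exfalso.
         apply: (NR3 i i' s); lia.
      -- split.
         ++ case: (leqP y (P jb + 1)) => // H. exfalso.
            have [w [wn Pw]] := Psurj (Hperm Hav) (v:=y.-1) ltac:(lia).
            case: (ltngtP w s) => H2.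
            ** case: (ltngtP w jb) => H3.
               --- apply: (T3 w jb s); lia.
               --- by apply: (b3 w) => //; lia.
               --- subst w; lia.
            ** have := lastq _ (oneqB_y2 y0 sN (i:=i) (k:=w) ltac:(lia) ltac:(lia) ltac:(rewrite Sz; lia) yi ltac:(lia)).
               lia.
            ** subst w; lia.
         ++ case=> X [V [x1 x2 x3 x4]]. apply: (NR3 X V s); lia.
    *
      have Later : forall k, s < k < n -> P k < y -> False.
        move=> k hk Pk. have := lastq _ (oneqB_y2 y0 sN (i:=U) (k:=k) ltac:(lia) ltac:(lia) ltac:(rewrite Sz; lia) U2 Pk). lia.
      have RLs : RLmin p s.
        move=> k' hk'; rewrite Sz in hk'. case: (ltngtP (P s) (P k')) => // H.
        -- exfalso; apply: (Later k') => //; lia.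
        -- have := PI (i:=s) (j:=k') ltac:(lia) ltac:(lia) H; lia.
      have Mx : forall lo k, lo <= k < size p -> RLmin p k -> P k < y -> P k <= P s.
        move=> lo k hk Rk Pk. rewrite Sz in hk. case: (ltngtP k s) => H.
        -- have := Rk s ltac:(rewrite Sz; lia); lia.
        -- exfalso; apply: (Later k) => //; lia.
        -- subst k; lia.
      have Un : P U <= n by have := PR (k:=U) ltac:(lia); lia.
      have Ps1 := PR (k:=s) sn'.
      case: (boolP (contains p [:: 3;2;1])) => Hc.
      -- have [ja La] := last_exists Hc.
         have [jb Hb] := b_exists Hav La.
         have jas : ja < s.
           have jan : ja < n by case: La => /one321P [? [? [_ _ h _ _]]] _; rewrite -Sz.
           case: (ltnP ja s) => // H. have := Y1 ja jan (proj1 La). rewrite /gg; case: ifP; [lia|].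
           move=> _ H2. have ? : ja = s by lia. subst ja. by case: La.
         have LC := Lc Hav La Hb.
         have Hjb : P jb < P s by apply: LC; lia.
         right; right; left; exists ja, jb; split => //; try lia.
         split.
         ++ have := @argmin_first (fun k => ~ LRMax p k) ja.+1 n.
            case.
              exists s; split; first lia. move=> HL. have := HL U ltac:(lia). lia.
            move=> jc [hjc Njc Mjc]. exists jc; split.
            ** split; first lia. split; first by rewrite Sz; lia. split => //.
               move=> k h1 h2. apply: NNPP. apply: (Mjc k). lia.
            ** case: (ltnP (P jc) y) => // H. exfalso.
               have jcs : jc < s.
                 case: (ltngtP jc s) => // H2; last by subst jc; lia.
                 exfalso; apply: (Mjc s); [lia| move=> HL; have := HL U ltac:(lia); lia].
               apply: Njc => k' hk'. case: (ltngtP (P k') (P jc)) => // H3.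
               --- exfalso; apply: Hps; apply/one321P; exists k', jc; rewrite Sz; split => //; lia.
               --- have := PI (i:=k') (j:=jc) ltac:(lia) ltac:(lia) H3; lia.
         ++ split; rewrite ?Sz //; try lia. move=> k hk Rk Pk. apply: (Mx ja k) => //. by rewrite Sz.
      -- right; right; right; split; [by apply/negP|lia|lia|].
         split; rewrite ?Sz //; try lia. move=> k hk Rk Pk. apply: (Mx 0 k) => //. by rewrite Sz.
Qed.

End G.

Section H.
Variables (n : nat) (p : seq nat) (y s : nat).
Hypothesis Hav : avoider n p.
Hypothesis y0 : 0 < y.
Hypothesis yN : y <= n.+1.
Hypothesis sn : s <= n.
Local Notation P := (ent p).
Local Notation q := (ins p s.+1 y).
Local Notation Q := (ent (ins p s.+1 y)).

Let Sz := Sz Hav.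
Let sN : s <= size p. Proof. by rewrite Sz. Qed.
Let N4 := no4321 Hav.
Let N3 := no3241 Hav.
Let PI := Pinj' Hav.
Let PR := Prange' Hav.
Let Hp := Hperm Hav.

Lemma shinj a b : sh y a = sh y b -> a = b.
Proof. rewrite /sh; case: ifP; case: ifP; lia. Qed.

Lemma blue_eq : (forall k, k < n -> bpos q (gg s k) -> bpos p k) ->
  forall k, k < n -> blue q (sh y (P k)) = blue p (P k).
Proof.
move=> HB k kn. have [E L A B] := gfacts y0 sN (k:=k) ltac:(lia).
apply/idP/idP.
- case/blueP => t [Bt Et].
  have tn : t < n.+1.
    case: Bt; rewrite (size_ins y0 sN) Sz.
    + by case=> ? [? [? ? ? _ _]]; lia.
    + by case=> ? [? [? [? ? ? ? _]]]; lia.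
  case: (eqVneq t s) => ts.
    by move: Et; rewrite ts (Q_eq y0 sN) => /eqP; rewrite eq_sym sh_neq.
  have [E' L' A' B'] := hfacts y0 sN (t:=t) ltac:(lia) ts.
  rewrite E' in Et. have := shinj Et => H. have := PI (i:=hh s t) (j:=k) ltac:(lia) kn H.
  move=> H2. have tg : t = gg s k by lia.
  rewrite tg in Bt. apply/blueP; exists k; split => //. exact: HB.
- case/blueP => k' [Bk' Ek'].
  have k'n : k' < n.
    case: Bk'; rewrite Sz.
    + by case=> ? [? [? ? ? _ _]]; lia.
    + by case=> ? [? [? [? ? ? ? _]]]; lia.
  have := PI k'n kn Ek' => ?. subst k'.
  apply/blueP; exists (gg s k); split => //. exact: blueqL.
Qed.

Lemma goodY2 : s < n -> P s < y ->
  (forall k, s < k < n -> y <= P k) ->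
  (exists X, X < s /\ y <= P X) ->
  (forall k, s < k < n -> ~ one321_at p k) ->
  ~ desc p y s ->
  (forall i j, i < j -> j < s -> P j < P i -> P i < y -> P s < P j -> False) ->
  good_insertion n p s.+1 y.
Proof.
move=> sn' a b [X [X1 X2]] e f g.
have Ps1 := PR sn'. have PX := PR (k:=X) ltac:(lia).
have Pb : forall k, s < k < n -> P s < P k by move=> k hk; have := b k hk; lia.
split; [|split].
- apply/and4P; split.
  + exact: (is_perm_ins Hp y0 yN sn).
  + apply: (indec_ins Hp y0 yN sn (Hind Hav)); lia.
  + apply/negP => /(q3241F y0 sN) [Hc|[[j [k [l [h1 h2 h3 h4 [v1 v2 v3]]]]]|[[i [k [l [h1 h2 h3 h4 [v1 v2 v3]]]]]|[[i [j [l [h1 h2 h3 h4 [v1 v2 v3]]]]]|[i [j [k [h1 h2 h3 h4 [v1 v2 v3]]]]]]]]].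
    * by case/and4P: Hav => _ _ /negP.
    * rewrite Sz in h4. case: (ltngtP j s) => H; [lia| have := b j; lia | subst j; have := b l; lia].
    * rewrite Sz in h4. have := b l; lia.
    * rewrite Sz in h4. case: (ltngtP l s) => H; [lia| have := b l; lia | subst l].
      exact: (g i j).
    * apply: f; exists i, j; split => //; lia.
  + apply/negP => /(q4321F y0 sN) [Hc|[[j [k [l [h1 h2 h3 h4 [v1 v2 v3]]]]]|[[i [k [l [h1 h2 h3 h4 [v1 v2 v3]]]]]|[[i [j [l [h1 h2 h3 h4 [v1 v2 v3]]]]]|[i [j [k [h1 h2 h3 h4 [v1 v2 v3]]]]]]]]].
    * by case/and4P: Hav => _ _ _ /negP.
    * rewrite Sz in h4. case: (ltngtP j s) => H; [lia| have := b j; lia | subst j; have := b k; lia].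
    * rewrite Sz in h4. case: (ltngtP k s) => H; [lia| have := b k; lia | subst k; have := b l; lia].
    * apply: f; exists i, j; split => //; lia.
    * apply: f; exists j, k; split => //; lia.
- exists s.+1; split; [split|].
  + apply: (oneqB_y2 y0 sN (i:=X) (k:=s)) => //. by rewrite Sz.
  + move=> t /(oneqF y0 sN) [tn [[? ?]|[[ts Ho]|[[st [i [i1 i2 i3]]]|[st [j [j1 j2 j3 j4]]]]]]].
    * lia.
    * have [E L A B] := hfacts y0 sN (t:=t) tn ts.
      case: (leqP t s.+1) => // H. exfalso; apply: (e (hh s t)) => //. rewrite Sz in L. lia.
    * case: (leqP t s.+1) => // H. rewrite Sz in tn. have := b t.-1; lia.
    * case: (leqP t s.+1) => // H. rewrite Sz in tn.
      case: (ltngtP j s) => H2; [lia|have := b j; lia|subst j; have := b t.-1; lia].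
  + rewrite (Q_gt y0 sN (t:=s.+1)) // (Q_eq y0 sN) /= /sh. case: ifP; lia.
- apply: (nblue_ins Hp).
  + apply: blue_eq => k kn Hb. have kN : k < size p by rewrite Sz.
    case: (blueqF y0 sN kN Hb) => [//|H].
    case: H => [[h1 [h2 [l [l1 l2 l3]]]]|[[h1 [h2 [i [i1 i2]]]]|[[j [l [h1 h2 h3 [v1 v2 v3]]]]|[[i [l [h1 h2 h3 [v1 v2 v3]]]]|[i [j [h1 h2 h3 [v1 v2 v3]]]]]]]].
    * rewrite Sz in l2. case: (ltngtP k s) => H; [lia|have := b k; lia|subst k; have := b l; lia].
    * left; exists i, s; rewrite Sz; split => //; lia.
    * case: (ltngtP j s) => H; [lia|have := b j; lia|subst j].
      have := b l; lia.
    * have := b k; lia.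
    * case: (ltngtP k s) => H; [lia| |subst k; lia].
      right; exists i, j, s; rewrite Sz; split => //; split => //; have := b k; lia.
  + apply: (blueqB1 y0 sN (i:=X) (k:=s)) => //. by rewrite Sz.
Qed.

Lemma goodY1 ja : s = ja.+1 -> P ja < y ->
  (forall k, ja < k < n -> y <= P k) ->
  desc p y ja ->
  (forall k, ja < k < n -> ~ one321_at p k) ->
  good_insertion n p s.+1 y.
Proof.
move=> es a b [u [v [u1 u2 u3 u4]]] e.
have jan : ja < n by lia.
have Pv := PR (k:=v) ltac:(lia).
split; [|split].
- apply/and4P; split.
  + exact: (is_perm_ins Hp y0 yN sn).
  + apply: (indec_ins Hp y0 yN sn (Hind Hav)); lia.
  + apply/negP => /(q3241F y0 sN) [Hc|[[j [k [l [h1 h2 h3 h4 [v1 v2 v3]]]]]|[[i [k [l [h1 h2 h3 h4 [v1 v2 v3]]]]]|[[i [j [l [h1 h2 h3 h4 [v1 v2 v3]]]]]|[i [j [k [h1 h2 h3 h4 [v1 v2 v3]]]]]]]]].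
    * by case/and4P: Hav => _ _ /negP.
    * rewrite Sz in h4. have := b j; lia.
    * rewrite Sz in h4. have := b l; lia.
    * rewrite Sz in h4. have := b l; lia.
    * case: (ltngtP k ja) => H; [|lia|subst k; lia].
      apply: (N3 (i:=i) (j:=j) (k:=k) (l:=ja)); lia.
  + apply/negP => /(q4321F y0 sN) [Hc|[[j [k [l [h1 h2 h3 h4 [v1 v2 v3]]]]]|[[i [k [l [h1 h2 h3 h4 [v1 v2 v3]]]]]|[[i [j [l [h1 h2 h3 h4 [v1 v2 v3]]]]]|[i [j [k [h1 h2 h3 h4 [v1 v2 v3]]]]]]]]].
    * by case/and4P: Hav => _ _ _ /negP.
    * rewrite Sz in h4. have := b j; lia.
    * rewrite Sz in h4. have := b k; lia.
    * rewrite Sz in h4. have := b l; lia.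
    * case: (ltngtP k ja) => H; [|lia|subst k; lia].
      apply: (N4 (i:=i) (j:=j) (k:=k) (l:=ja)); lia.
- exists s; split; [split|].
  + apply: (oneqB_s y0 sN (i:=u) (j:=v)) => //; lia.
  + move=> t /(oneqF y0 sN) [tn [[? ?]|[[ts Ho]|[[st [i [i1 i2 i3]]]|[st [j [j1 j2 j3 j4]]]]]]].
    * lia.
    * have [E L A B] := hfacts y0 sN (t:=t) tn ts.
      case: (leqP t s) => // H. exfalso; apply: (e (hh s t)) => //. rewrite Sz in L. lia.
    * case: (leqP t s) => // H. rewrite Sz in tn. have := b t.-1; lia.
    * case: (leqP t s) => // H. rewrite Sz in tn. have := b j; lia.
  + rewrite (Q_lt y0 sN (t:=s.-1)) ?(Q_eq y0 sN); last lia.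
    have -> : s.-1 = ja by lia. rewrite /sh. case: ifP; lia.
- apply: (nblue_ins Hp).
  + apply: blue_eq => k kn Hb. have kN : k < size p by rewrite Sz.
    case: (blueqF y0 sN kN Hb) => [//|H].
    case: H => [[h1 [h2 [l [l1 l2 l3]]]]|[[h1 [h2 [i [i1 i2]]]]|[[j [l [h1 h2 h3 [v1 v2 v3]]]]|[[i [l [h1 h2 h3 [v1 v2 v3]]]]|[i [j [h1 h2 h3 [v1 v2 v3]]]]]]]].
    * have := b k; lia.
    * case: (ltngtP k ja) => H; [|lia|subst k; lia].
      left; exists i, ja; rewrite Sz; split => //; lia.
    * have := b j; lia.
    * have := b k; lia.
    * case: (ltngtP j ja) => H; [|lia|subst j; have := b k; lia].
      right; exists i, j, ja; rewrite Sz; split; try lia; split; try lia; have := b k; lia.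
  + apply: (blueqB2 y0 sN (i:=u) (j:=v) (k:=ja)) => //; lia.
Qed.

End H.

Section I.
Variables (n : nat) (p : seq nat).
Hypothesis Hav : avoider n p.
Local Notation P := (ent p).

Let Sz := Sz Hav.
Let N4 := no4321 Hav.
Let N3 := no3241 Hav.
Let PI := Pinj' Hav.
Let PR := Prange' Hav.
Let Hp := Hperm Hav.

Lemma minpos k0 : k0 < n -> exists m, [/\ k0 <= m, m < n, RLmin p m & P m <= P k0].
Proof.
move=> k0n.
have := @argmax (fun k => True) (fun k => n - P k) k0 n (fun k => classic _).
case; first by exists k0; split => //; lia.
move=> m [hm _ Mm]. exists m; split; try lia.
- move=> k' hk'; rewrite Sz in hk'. have := Mm k' ltac:(lia) I.
  have := PR (k:=k') ltac:(lia). have := PR (k:=m) ltac:(lia).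
  have := PI (i:=m) (j:=k') ltac:(lia) ltac:(lia). lia.
- have := Mm k0 ltac:(lia) I. have := PR (k:=k0) ltac:(lia). have := PR (k:=m) ltac:(lia). lia.
Qed.

Lemma Lpre y s : s < n -> y <= n -> P s < y -> (forall k, s < k < n -> y <= P k) ->
  exists X, X < s /\ y <= P X.
Proof.
move=> sn yn a b. apply: NNPP => H.
have H' : forall X, X < s -> P X < y.
  move=> X hX; case: (ltnP (P X) y) => // H2; exfalso; apply: H; exists X; split => //.
have Ps := PR sn.
have pig : y.-1 <= s.+1.
  have := @uniq_leq_size _ (iota 1 y.-1) (take s.+1 p) (iota_uniq _ _).
  rewrite size_iota size_takel ?Sz //. apply.
  move=> v; rewrite mem_iota => hv.
  have vp : v \in p by rewrite (memp Hp); lia.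
  set k := index v p.
  have kn : k < n by rewrite -Sz index_mem.
  have Pk : P k = v by rewrite /ent nth_index.
  have ks : k < s.+1.
    case: (ltnP k s.+1) => // H3. have := b k ltac:(lia). lia.
  rewrite -Pk /ent -(nth_take 0 ks). apply: mem_nth. rewrite size_takel ?Sz //.
have [j [j1 j2]] := indecPF Hp (Hind Hav) (k:=y.-1) ltac:(lia).
case: (ltngtP j s) => H3.
- have := H' j H3. lia.
- lia.
- subst j. lia.
Qed.

Lemma spec_le y s : spec n p y s -> s <= n.
Proof.
case=> [[ja [jb [l b e v1 [v2 v3]]]]|[[ja [jb [l b e v1 [v2 v3]]]]|[[ja [jb [l b v1 v2 [v3 [_ v4 _ _ _]]]]]|[_ _ _ [_ v4 _ _ _]]]]].
- have : ja < n by case: l => /one321P [? [? [_ _ h _ _]]] _; rewrite -Sz. lia.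
- have : ja < n by case: l => /one321P [? [? [_ _ h _ _]]] _; rewrite -Sz. lia.
- rewrite Sz in v4; lia.
- rewrite Sz in v4; lia.
Qed.

Lemma existence y s : 0 < y <= n.+1 -> spec n p y s -> good_insertion n p s.+1 y.
Proof.
move=> /andP [y0 yN] Hs. have sn := spec_le Hs.
case: Hs => [[ja [jb [l b e v1 [v2 v3]]]]|[[ja [jb [l b e v1 [v2 v3]]]]|[[ja [jb [l b v1 v2 [[jc [Hc Pjc]] R]]]]|[Hc y2 yn R]]]].
-
  have jan : ja < n by case: l => /one321P [? [? [_ _ h _ _]]] _; rewrite -Sz.
  case: (l) => Ho Hlast.
  have F1 := F1p Hav Ho.
  have D : desc p y ja.
    case: v3 => // E. case/one321P: (Ho) => i [i' [h1 h2 h3 w1 w2]].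
    exists i, i'; split => //; lia.
  apply: (goodY1 Hav y0 yN sn e v1) => //.
  + move=> k hk. case: (leqP y (P k)) => // H. exfalso.
    case: v3 => [E|[i [j [i1 i2 i3 i4]]]].
    * have := F1 k hk. lia.
    * have : one321_at p k by apply/one321P; exists i, j; rewrite Sz; split => //; lia.
      move/Hlast; lia.
  + move=> k hk /Hlast; lia.
-
  have jan : ja < n by case: l => /one321P [? [? [_ _ h _ _]]] _; rewrite -Sz.
  case: (l) => Ho Hlast. subst s.
  have LC := Lc Hav l b. have [u [u1 u2]] := Lb Hav l b.
  case: (b) => [b1 [b2 b3]].
  apply: (goodY2 Hav y0 yN sn) => //.
  + lia.
  + move=> k hk; have := LC k hk; lia.
  + exists u; split; lia.
  + move=> k hk /Hlast; lia.
  + move=> i j h1 h2 w1 w2 w3.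
    case: (ltngtP j jb) => H.
    * have := PI (i:=i) (j:=jb) ltac:(lia) ltac:(lia).
      case: (ltngtP (P i) (P jb)) => H2 H3.
      -- apply: (N3 (i:=i) (j:=j) (k:=jb) (l:=ja)); lia.
      -- lia.
      -- have := H3 H2; lia.
    * by apply: (b3 j) => //.
    * subst j; lia.
-
  case: R => [r1 r2 r3 r4 r5]. rewrite Sz in r2.
  case: (l) => Ho Hlast.
  have F1 := F1p Hav Ho.
  have jcn : ja < jc < n by case: Hc => [c1 [c2 _]]; rewrite -Sz; lia.
  have sja : ja < s.
    have [m [m1 m2 m3 m4]] := minpos (k0:=jc) ltac:(lia).
    have := r5 m ltac:(rewrite Sz; lia) m3 ltac:(lia).
    case: (ltngtP ja s) => // H; [lia|subst s]. have := F1 m ltac:(lia). lia.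
  have bb : forall k, s < k < n -> y <= P k.
    move=> k hk. case: (leqP y (P k)) => // H. exfalso.
    have [m [m1 m2 m3 m4]] := minpos (k0:=k) ltac:(lia).
    have := r5 m ltac:(rewrite Sz; lia) m3 ltac:(lia).
    have := r3 m ltac:(rewrite Sz; lia). lia.
  apply: (goodY2 Hav y0 yN sn) => //.
  + exact: Lpre.
  + move=> k hk /Hlast; lia.
  + case=> i [j [i1 i2 i3 i4]].
    have : one321_at p s by apply/one321P; exists i, j; rewrite Sz; split => //; lia.
    move/Hlast; lia.
  + move=> i j h1 h2 w1 w2 w3.
    have : one321_at p s by apply/one321P; exists i, j; rewrite Sz; split => //; lia.
    move/Hlast; lia.
-
  case: R => [r1 r2 r3 r4 r5]. rewrite Sz in r2.
  have bb : forall k, s < k < n -> y <= P k.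
    move=> k hk. case: (leqP y (P k)) => // H. exfalso.
    have [m [m1 m2 m3 m4]] := minpos (k0:=k) ltac:(lia).
    have := r5 m ltac:(rewrite Sz; lia) m3 ltac:(lia).
    have := r3 m ltac:(rewrite Sz; lia). lia.
  have No : forall k, ~ one321_at p k.
    move=> k /one321P [i [j [h1 h2 h3 w1 w2]]]. apply: Hc; apply/c321P. by exists i, j, k.
  apply: (goodY2 Hav y0 yN sn) => //.
  + exact: Lpre.
  + case=> i [j [i1 i2 i3 i4]]. apply: (No s); apply/one321P; exists i, j; rewrite Sz; split => //; lia.
  + move=> i j h1 h2 w1 w2 w3. apply: (No s); apply/one321P; exists i, j; rewrite Sz; split => //; lia.
Qed.

End I.

Theorem proposition8 (n : nat) (p : seq nat) :
  avoider n p ->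
  forall y : nat, 1 <= y <= n.+1 ->
    (in_peak_insertion_set n p y ->
       exists! i : nat, (1 <= i <= n.+1) /\ good_insertion n p i y) /\
    (~ in_peak_insertion_set n p y ->
       ~ exists i : nat, (1 <= i <= n.+1) /\ good_insertion n p i y).
Proof.
move=> Hav y Hy. have y0 : 0 < y by lia. have yN : y <= n.+1 by lia.
split.
- move=> Hin. have [s Hs] := set_spec Hav Hy Hin.
  have sn := spec_le Hav Hs.
  exists s.+1; split.
  + split; first lia. exact: existence.
  + move=> i [Hi Hg]. have ei : i = i.-1.+1 by lia.
    rewrite ei in Hg. have := soundness Hav y0 yN (s:=i.-1) ltac:(lia) Hg.
    move=> Hs'. have := spec_unique Hav Hs Hs'. lia.
- move=> Hnin [i [Hi Hg]]. have ei : i = i.-1.+1 by lia.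
  rewrite ei in Hg. have := soundness Hav y0 yN (s:=i.-1) ltac:(lia) Hg.
  move/(spec_in_set Hav). exact: Hnin.
Qed.
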